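(* Let $A,B \in\mathbb{C}^{n\times n}$. If $A\leq^{GD1}B$, then $A\leq^{D,-}B$.
   Context: For $A\in\mathbb{C}^{n\times n}$, $ind(A)$ is the smallest nonnegative integer $k$ with $\mathrm{rank}(A^k)=\mathrm{rank}(A^{k+1})$. $A\{1\}$ is the set of matrices $X$ with $AXA=A$. With $k=ind(A)$, $A\{GD\}$ is the set of matrices $X$ with $AXA=A$, $XA^{k+1}=A^k$, $A^{k+1}X=A^k$ (G-Drazin inverses). The Drazin inverse $A^D$ is the unique $X$ with $XAX=X$, $XA=AX$, $XA^{k+1}=A^k$. A GD1 inverse of $A$ is a matrix $A^{GD1}=A^{GD}AA^-$ with $A^-\in A\{1\}$, $A^{GD}\in A\{GD\}$. We write $A\leq^{GD1}B$ if $AA^{GD1}=BA^{GD1}$ and $A^{GD1}A=A^{GD1}B$ for some GD1 inverse $A^{GD1}$ of $A$. For $A^-\in A\{1\}$, the D1 inverse is $A^{D,-}=A^DAA^-$; we write $A\leq^{D,-}B$ if $A^{D,-}A=A^{D,-}B$ and $AA^{D,-}=BA^{D,-}$ for some D1 inverse $A^{D,-}$ of $A$ (i.e. for some $A^-\in A\{1\}$). *)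

(* Defs.v *)
From HB Require Import structures.
From mathcomp Require Import all_boot all_order all_algebra.
From mathcomp Require Import complex.
Set Implicit Arguments. Unset Strict Implicit. Unset Printing Implicit Defensive.
Import Order.TTheory GRing.Theory Num.Theory.
Local Open Scope ring_scope.

(* Complex n x n matrices: entries in R[i] = complex R for R a real closed field
   (with R the reals this is C). *)

Section GD.
Variable F : fieldType.
Variable n : nat.
Implicit Types A B X : 'M[F]_n.

Definition mxpow A (k : nat) : 'M[F]_n := iter k (mulmx A) 1%:M.

Definition is_index A (k : nat) : Prop :=
  \rank (mxpow A k) = \rank (mxpow A k.+1) /\
  forall j, (j < k)%N -> \rank (mxpow A j) <> \rank (mxpow A j.+1).

Definition inner_inv A X : Prop := A *m X *m A = A.

Definition GD_inv A X : Prop :=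
  forall k, is_index A k ->
    [/\ A *m X *m A = A,
        X *m mxpow A k.+1 = mxpow A k &
        mxpow A k.+1 *m X = mxpow A k].

Definition Drazin_inv A X : Prop :=
  forall k, is_index A k ->
    [/\ X *m A *m X = X, X *m A = A *m X & X *m mxpow A k.+1 = mxpow A k].

Definition GD1_le A B : Prop :=
  exists Xgd X1, GD_inv A Xgd /\ inner_inv A X1 /\
    let G := Xgd *m A *m X1 in
    A *m G = B *m G /\ G *m A = G *m B.

Definition D1_le A B : Prop :=
  exists XD X1, Drazin_inv A XD /\ inner_inv A X1 /\
    let G := XD *m A *m X1 in
    G *m A = G *m B /\ A *m G = B *m G.

End GD.

(* Main.v *)
Require Import Defs.
From HB Require Import structures.
From mathcomp Require Import all_boot all_order all_algebra.
From mathcomp Require Import complex.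
From Stdlib Require Import Classical.
Set Implicit Arguments. Unset Strict Implicit. Unset Printing Implicit Defensive.
Local Open Scope ring_scope.

Section Aux.
Variables (F : fieldType) (n : nat).
Implicit Types A X : 'M[F]_n.

Lemma mxpowS A i : mxpow A i.+1 = A *m mxpow A i.
Proof. by []. Qed.

Lemma mxpow0 A : mxpow A 0 = 1%:M.
Proof. by []. Qed.

Lemma mxpowD A i j : mxpow A (i + j) = mxpow A i *m mxpow A j.
Proof.
elim: i => [|i IH]; first by rewrite add0n mxpow0 mul1mx.
by rewrite addSn !mxpowS IH mulmxA.
Qed.

Lemma mxpowSr A i : mxpow A i.+1 = mxpow A i *m A.
Proof. by rewrite -addn1 mxpowD mxpowS mxpow0 mulmx1. Qed.

Lemma index_uniq A k k' : is_index A k -> is_index A k' -> k = k'.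
Proof.
move=> [e1 h1] [e2 h2]; case: (ltngtP k k') => // H.
- by exfalso; apply: (h2 k H).
- by exfalso; apply: (h1 k' H).
Qed.

Variables (A X : 'M[F]_n) (k : nat).
Hypotheses (XP : X *m mxpow A k.+1 = mxpow A k)
           (PX : mxpow A k.+1 *m X = mxpow A k).

Lemma L3 j i : mxpow X j *m mxpow A (k + j + i) = mxpow A (k + i).
Proof.
elim: j i => [|j IH] i; first by rewrite mxpow0 mul1mx addn0.
rewrite mxpowS -mulmxA.
have -> : (k + j.+1 + i = k + j + i.+1)%N by rewrite addnS addSn addnS.
rewrite IH addnS -addSn mxpowD mulmxA XP -mxpowD //.
Qed.

Lemma L4 j i : mxpow A (k + j + i) *m mxpow X j = mxpow A (k + i).
Proof.
elim: j i => [|j IH] i; first by rewrite mxpow0 mulmx1 addn0.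
rewrite mxpowSr mulmxA.
have -> : (k + j.+1 + i = k + j + i.+1)%N by rewrite addnS addSn addnS.
rewrite IH addnS -addSn addnC mxpowD -mulmxA PX -mxpowD addnC //.
Qed.

Definition Dz := mxpow X k.+1 *m mxpow A k.

Lemma D_alt : Dz = mxpow A k *m mxpow X k.+1.
Proof.
have e1 := L4 k.+1 0; have e2 := L3 k.+1 0; rewrite !addn0 in e1 e2.
by rewrite /Dz -{1}e1 mulmxA e2.
Qed.

Lemma DA : Dz *m A = A *m Dz.
Proof.
have e1 := L4 k.+1 1; have e2 := L3 k.+1 1; rewrite !addn1 in e1 e2.
rewrite {2}D_alt mulmxA -mxpowS /Dz -mulmxA -mxpowSr.
by rewrite -{1}e1 mulmxA e2.
Qed.

Lemma DAk : Dz *m mxpow A k.+1 = mxpow A k.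
Proof.
have e2 := L3 k.+1 0; rewrite !addn0 in e2.
by rewrite /Dz -mulmxA -mxpowD.
Qed.

Lemma DAD : Dz *m A *m Dz = Dz.
Proof.
have e2 := L3 k.+1 0; rewrite !addn0 in e2.
have -> : Dz *m A = mxpow X k.+1 *m mxpow A k.+1 by rewrite /Dz -mulmxA -mxpowSr.
rewrite D_alt mulmxA -[_ *m mxpow A k.+1 *m _]mulmxA -mxpowD.
have -> : (k.+1 + k = k + k.+1)%N by rewrite addnC.
by rewrite e2.
Qed.

Lemma DAX : Dz *m A *m X = Dz.
Proof. by rewrite /Dz -(mulmxA _ (mxpow A k) A) -mxpowSr -mulmxA PX. Qed.

Lemma XAD : X *m A *m Dz = Dz.
Proof. by rewrite D_alt mulmxA -(mulmxA X) -mxpowS XP -D_alt. Qed.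

End Aux.

Theorem proposition2p12 (R : rcfType) (n : nat) (A B : 'M[R[i]]_n) :
  GD1_le A B -> D1_le A B.
Proof.
move=> [X [X1 [HX [HX1 [HG1 HG2]]]]].
case: (classic (exists k, is_index A k)) => [[k0 Hk0]|Hno]; last first.
  exists 0, X1; split.
    by move=> k Hk; exfalso; apply: Hno; exists k.
  split=> //=; by rewrite !mul0mx !mulmx0.
have [AXA XP PX] := HX k0 Hk0.
exists (Dz A X k0), X1; split.
  move=> k Hk; rewrite -(index_uniq Hk0 Hk); split.
  - exact: (DAD XP PX).
  - exact: (DA XP PX).
  - exact: (DAk XP).
split=> //=.
have hAX := DAX PX.
have hXA := XAD XP PX.
move: (Dz A X k0) hAX hXA => D hAX hXA.
have hx1 : A *m X1 *m A = A := HX1.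
have hXA2 : X *m A = X *m A *m X1 *m B.
  by rewrite -HG2 -(mulmxA (X *m A)) -(mulmxA X) (mulmxA A X1) hx1.
have BXA : B *m X *m A = A.
  have h : A *m (X *m A *m X1) *m A = B *m (X *m A *m X1) *m A by rewrite HG1.
  rewrite -!mulmxA (mulmxA A X1 A) hx1 !mulmxA AXA in h.
  exact: (esym h).
split.
- rewrite -(mulmxA (D *m A) X1 A) -(mulmxA (D) A (X1 *m A)) (mulmxA A X1 A) hx1.
  rewrite -{1}hAX -(mulmxA (D *m A) X A) hXA2 !mulmxA.
  by rewrite hAX.
- rewrite !mulmxA; congr (_ *m _ *m _).
  by rewrite -{2}hXA !mulmxA BXA.
Qed.
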